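(* Let $\Phi_1,\Phi_2$ be quantum channels on $\mathcal D_n$ and let $|\psi_+\rangle\in\mathbb C^n\otimes\mathbb C^n$ be any maximally entangled state, with $\Phi_1$ acting on the first and $\Phi_2$ on the second factor. Then $$-\log\Big(1-\big|e^{-S_2^{\mathrm{map}}(\Phi_1)}-e^{-S_2^{\mathrm{map}}(\Phi_2)}\big|\Big)\;\le\; S_2\big((\Phi_1\otimes\Phi_2)(|\psi_+\rangle\langle\psi_+|)\big).$$
   Context: A quantum channel on $\mathcal D_n$ ($n\times n$ density matrices) is a linear, completely positive, trace-preserving map. A maximally entangled state is a unit vector in $\mathbb C^n\otimes\mathbb C^n$ whose reduced density matrices equal $\frac1n\mathbb 1$. The Jamiołkowski state of $\Phi$ is $\sigma^\Phi=(\Phi\otimes\mathrm{id})(|\phi_+\rangle\langle\phi_+|)$ with $|\phi_+\rangle=\frac1{\sqrt n}\sum_i|i\rangle\otimes|i\rangle$. The Renyi-2 entropy is $S_2(\rho)=-\log\operatorname{tr}\rho^2$ and $S_2^{\mathrm{map}}(\Phi)=S_2(\sigma^\Phi)$, so $e^{-S_2^{\mathrm{map}}(\Phi)}=\operatorname{tr}(\sigma^\Phi)^2$. *)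

(* Defs.v *)
(* complex scalars are an arbitrary numClosedFieldType C. *)
From HB Require Import structures.
From mathcomp Require Import all_boot all_order all_algebra.
Set Implicit Arguments. Unset Strict Implicit. Unset Printing Implicit Defensive.
Import Order.TTheory GRing.Theory Num.Theory.
Local Open Scope ring_scope.

(* bipartite indices: 'I_(n*k) <-> 'I_n * 'I_k (first factor, second factor) *)
Definition pidx (n k : nat) (i : 'I_n) (a : 'I_k) : 'I_(n * k) := mxvec_index i a.
Definition unpair (n k : nat) (p : 'I_(n * k)) : 'I_n * 'I_k :=
  enum_val (cast_ord (esym (mxvec_cast n k)) p).

Definition adj (C : numClosedFieldType) (m n : nat) (A : 'M[C]_(m, n)) : 'M[C]_(n, m) :=
  (map_mx Num.conj A)^T.

Definition psd (C : numClosedFieldType) (m : nat) (A : 'M[C]_m) : Prop :=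
  forall x : 'cV[C]_m, 0 <= (adj x *m A *m x) 0 0.

(* (Phi ⊗ id_k)(X) for X on C^n ⊗ C^k *)
Definition app_left (C : numClosedFieldType) (n k : nat)
  (Phi : 'M[C]_n -> 'M[C]_n) (X : 'M[C]_(n * k)) : 'M[C]_(n * k) :=
  \matrix_(p, q)
    Phi (\matrix_(i, j) X (pidx i (unpair p).2) (pidx j (unpair q).2))
        (unpair p).1 (unpair q).1.

(* (id_k ⊗ Psi)(X) for X on C^k ⊗ C^n *)
Definition app_right (C : numClosedFieldType) (k n : nat)
  (Psi : 'M[C]_n -> 'M[C]_n) (X : 'M[C]_(k * n)) : 'M[C]_(k * n) :=
  \matrix_(p, q)
    Psi (\matrix_(a, b) X (pidx (unpair p).1 a) (pidx (unpair q).1 b))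
        (unpair p).2 (unpair q).2.

Definition tensor_map (C : numClosedFieldType) (n : nat)
  (Phi1 Phi2 : 'M[C]_n -> 'M[C]_n) (X : 'M[C]_(n * n)) : 'M[C]_(n * n) :=
  app_left Phi1 (app_right Phi2 X).

Definition is_channel (C : numClosedFieldType) (n : nat) (Phi : 'M[C]_n -> 'M[C]_n) : Prop :=
  [/\ (forall (a : C) (X Y : 'M[C]_n), Phi (a *: X + Y) = a *: Phi X + Phi Y),
      (forall (k : nat) (A : 'M[C]_(n * k)), psd A -> psd (app_left Phi A)) &
      (forall X : 'M[C]_n, \tr (Phi X) = \tr X)].

(* |phi_+><phi_+| with phi_+ = n^{-1/2} sum_i |i>|i> *)
Definition phiplus_dm (C : numClosedFieldType) (n : nat) : 'M[C]_(n * n) :=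
  \matrix_(p, q)
    (if ((unpair p).1 == (unpair p).2) && ((unpair q).1 == (unpair q).2)
     then (n%:R)^-1 else 0).

Definition jam (C : numClosedFieldType) (n : nat) (Phi : 'M[C]_n -> 'M[C]_n) : 'M[C]_(n * n) :=
  app_left Phi (phiplus_dm C n).

Definition purity (C : numClosedFieldType) (m : nat) (rho : 'M[C]_m) : C := \tr (rho *m rho).

Definition S2 (C : numClosedFieldType) (log : C -> C) (m : nat) (rho : 'M[C]_m) : C :=
  - log (purity rho).
Definition S2map (C : numClosedFieldType) (log : C -> C) (n : nat)
  (Phi : 'M[C]_n -> 'M[C]_n) : C := S2 log (jam Phi).

Definition red1 (C : numClosedFieldType) (n : nat) (psi : 'cV[C]_(n * n)) : 'M[C]_n :=
  \matrix_(i, j) \sum_(a < n) psi (pidx i a) 0 * Num.conj (psi (pidx j a) 0).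
Definition red2 (C : numClosedFieldType) (n : nat) (psi : 'cV[C]_(n * n)) : 'M[C]_n :=
  \matrix_(a, b) \sum_(i < n) psi (pidx i a) 0 * Num.conj (psi (pidx i b) 0).

Definition max_entangled (C : numClosedFieldType) (n : nat) (psi : 'cV[C]_(n * n)) : Prop :=
  [/\ (adj psi *m psi) 0 0 = 1,
      red1 psi = (n%:R)^-1%:M & red2 psi = (n%:R)^-1%:M].

(* Main.v *)
Require Import Defs.
From HB Require Import structures.
From mathcomp Require Import all_boot all_order all_algebra.
Set Implicit Arguments. Unset Strict Implicit. Unset Printing Implicit Defensive.
Import Order.TTheory GRing.Theory Num.Theory.
Local Open Scope ring_scope.

Section Chol.
Variable C : numClosedFieldType.

Lemma sum_delta (I : finType) (F : I -> C) i : \sum_t (t == i)%:R * F t = F i.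
Proof.
rewrite (bigD1 i) //= eqxx mul1r big1 ?addr0 // => t /negbTE ->; by rewrite mul0r.
Qed.
Lemma sum_delta_r (I : finType) (F : I -> C) i : \sum_t F t * (t == i)%:R = F i.
Proof. rewrite -[RHS](sum_delta F i); apply: eq_bigr => t _; exact: mulrC. Qed.

Definition qf m (A : 'M[C]_m) (x : 'I_m -> C) := \sum_i \sum_j (x i)^* * A i j * x j.
Definition psdf m (A : 'M[C]_m) := forall x, 0 <= qf A x.

Lemma qf_ext m (A : 'M[C]_m) x y : (forall i, x i = y i) -> qf A x = qf A y.
Proof. by move=> e; rewrite /qf; apply: eq_bigr => i _; apply: eq_bigr => j _; rewrite !e. Qed.

Lemma qf_mx m (A : 'M[C]_m) (x : 'cV[C]_m) : (adj x *m A *m x) 0 0 = qf A (fun i => x i 0).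
Proof.
rewrite /qf mxE; under eq_bigr do rewrite mxE big_distrl /=.
rewrite exchange_big /=; apply: eq_bigr => i _; apply: eq_bigr => j _.
by rewrite /adj !mxE.
Qed.

Lemma psd_psdf m (A : 'M[C]_m) : psd A -> psdf A.
Proof.
move=> H x; have := H (\col_i x i); rewrite qf_mx.
by rewrite (@qf_ext _ _ _ x) // => i; rewrite mxE.
Qed.

Lemma psdf_psd m (A : 'M[C]_m) : psdf A -> psd A.
Proof. by move=> H x; rewrite qf_mx. Qed.

Lemma qf2 m (A : 'M[C]_m) i j a b :
  qf A (fun t => (t == i)%:R * a + (t == j)%:R * b) =
  a^* * A i i * a + a^* * A i j * b + (b^* * A j i * a + b^* * A j j * b).
Proof.
rewrite /qf.
have inner : forall s, \sum_t ((s == i)%:R * a + (s == j)%:R * b)^* * A s t *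
     ((t == i)%:R * a + (t == j)%:R * b) =
   ((s == i)%:R * a^* + (s == j)%:R * b^*) * (A s i * a + A s j * b).
  move=> s; rewrite rmorphD !rmorphM /= !conjC_nat.
  under eq_bigr do rewrite -mulrA.
  rewrite -big_distrr /=; congr (_ * _).
  have e : forall t, A s t * ((t == i)%:R * a + (t == j)%:R * b) =
    (t == i)%:R * (A s t * a) + (t == j)%:R * (A s t * b).
    by move=> t; rewrite mulrDr (mulrCA (A s t)) (mulrCA (A s t)).
  under eq_bigr do rewrite e.
  by rewrite big_split /= !sum_delta.
under eq_bigr do rewrite inner.
under eq_bigr do rewrite mulrDl -!mulrA.
rewrite big_split /= !sum_delta.
by rewrite !mulrDr !mulrA.
Qed.


Lemma psdf_diag_ge0 m (A : 'M[C]_m) i : psdf A -> 0 <= A i i.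
Proof.
move=> H; have := H (fun t => (t == i)%:R * 1 + (t == i)%:R * 0).
rewrite qf2 !mulr0 conjC0 !mul0r !addr0 conjC1 mul1r mulr1 /=.
  by [].
Qed.

Lemma cancel4 (x d a b a' b' : C) : x + a + (b + d) = x + a' + (b' + d) -> a + b = a' + b'.
Proof. by rewrite -!addrA => /addrI; rewrite !addrA => /addIr. Qed.

Lemma psdf_herm m (A : 'M[C]_m) i j : psdf A -> A j i = (A i j)^*.
Proof.
move=> H.
have ri := conj_Creal (ger0_real (psdf_diag_ge0 i H)).
have rj := conj_Creal (ger0_real (psdf_diag_ge0 j H)).
have h1 := conj_Creal (ger0_real (H (fun t => (t == i)%:R * 1 + (t == j)%:R * 1))).
have h2 := conj_Creal (ger0_real (H (fun t => (t == i)%:R * 1 + (t == j)%:R * 'i))).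
rewrite qf2 conjC1 !mul1r !mulr1 in h1.
rewrite qf2 conjC1 !mul1r !mulr1 in h2.
set u := A i j in h1 h2 *; set v := A j i in h1 h2 *.
have e1 : u^* + v^* = u + v.
  rewrite !rmorphD /= ri rj in h1.
  exact: cancel4 h1.
have cii : 'i^* * A j j * 'i = A j j.
  by rewrite conjCi mulrAC mulNr -expr2 sqrCi opprK mul1r.
rewrite cii in h2.
have e2 : u^* - v^* = v - u.
  rewrite !rmorphD !rmorphM /= conjCK ri rj conjCi in h2.
  move/cancel4: h2 => h.
  rewrite mulrN (mulrC u^*) (mulrC u) addrC ?mulNr in h.
  apply: (mulfI (neq0Ci C)); apply: oppr_inj; rewrite !mulrBr !opprB; exact: h.
have : u^* *+ 2 = v *+ 2.
  rewrite mulr2n -[u^* + u^*]addr0 -(subrr v^*) addrACA e1 e2.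
  by rewrite addrCA (addrC u v) addrK mulr2n.
rewrite -(mulr_natl u^*) -(mulr_natl v) => /(mulfI _) -> //.
by rewrite pnatr_eq0.
Qed.


Lemma psdf_zero_row m (A : 'M[C]_m) t j : psdf A -> A t t = 0 -> A t j = 0.
Proof.
move=> H att; case: (eqVneq (A t j) 0) => // nz; exfalso.
set u := A t j in nz.
have nzc : u^* != 0 by rewrite conjC_eq0.
have rj := conj_Creal (ger0_real (psdf_diag_ge0 j H)).
set h := A j j + 1.
have rh : h^* = h by rewrite /h rmorphD /= rj conjC1.
have H0 := H (fun s => (s == t)%:R * (- (h / u^*)) + (s == j)%:R * 1).
rewrite qf2 att mulr0 mul0r add0r conjC1 !mul1r !mulr1 (@psdf_herm _ _ t j H) -/u in H0.
have e1 : (- (h / u^*))^* * u = - h.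
  by rewrite rmorphN rmorphM /= fmorphV /= conjCK rh mulNr divfK.
have e2 : u^* * - (h / u^*) = - h.
  by rewrite mulrN mulrC divfK.
have t1 : - (A j j + 1) + A j j = -1 by rewrite opprD addrAC addNr add0r.
rewrite e1 e2 /h t1 in H0.
move: H0; rewrite -opprD oppr_ge0 => H1.
have : 0 < A j j + 1 + 1.
  by rewrite ltr_wpDl ?ltr01 // addr_ge0 ?ler01 ?(psdf_diag_ge0 j H).
by move=> hh; have := lt_le_trans hh H1; rewrite ltxx.
Qed.


Lemma qf_row m (A : 'M[C]_m) x : qf A x = \sum_i (x i)^* * (\sum_j A i j * x j).
Proof. by apply: eq_bigr => i _; rewrite big_distrr /=; apply: eq_bigr => j _; rewrite mulrA. Qed.

Lemma qf_shift m (A : 'M[C]_m) x t d :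
  qf A (fun i => x i + (i == t)%:R * d) =
  qf A x + d^* * (\sum_j A t j * x j) + (\sum_i (x i)^* * A i t) * d + d^* * A t t * d.
Proof.
rewrite !qf_row.
have inner : forall i, \sum_j A i j * (x j + (j == t)%:R * d) =
    \sum_j A i j * x j + A i t * d.
  move=> i; under eq_bigr do rewrite mulrDr (mulrCA (A i _)).
  by rewrite big_split /= sum_delta.
under eq_bigr do rewrite inner rmorphD rmorphM /= conjC_nat mulrDl -mulrA.
rewrite big_split /= sum_delta.
under eq_bigr do rewrite mulrDr.
rewrite big_split /= -!addrA; congr (_ + _).
rewrite mulrDr addrCA; congr (_ + _).
  by rewrite big_distrl /=; apply: eq_bigr => i _; rewrite mulrA.
by rewrite mulrA.
Qed.


Lemma qf_sub m (A : 'M[C]_m) (v : 'I_m -> C) x :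
  qf (\matrix_(i, j) (A i j - v i * (v j)^*)) x =
  qf A x - (\sum_i (x i)^* * v i) * (\sum_j (v j)^* * x j).
Proof.
rewrite /qf big_distrlr /= -sumrB; apply: eq_bigr => i _.
rewrite -sumrB; apply: eq_bigr => j _.
by rewrite mxE mulrBr mulrBl !mulrA.
Qed.

Lemma psdf_schur m (A : 'M[C]_m) t : psdf A -> A t t != 0 ->
  psdf (\matrix_(i, j) (A i j - A i t / sqrtC (A t t) * (A j t / sqrtC (A t t))^*)).
Proof.
move=> H nz x.
set a := A t t in nz *; set s := sqrtC a.
have ea : a^* = a := conj_Creal (ger0_real (psdf_diag_ge0 t H)).
have es : s^* = s by apply: conj_Creal; apply: ger0_real; rewrite sqrtC_ge0 psdf_diag_ge0.
have ss : s * s = a by rewrite -expr2 sqrtCK.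
have nzs : s != 0 by rewrite sqrtC_eq0.
set al := \sum_j A t j * x j.
have e1 : \sum_j (A j t / s)^* * x j = al / s.
  rewrite /al big_distrl /=; apply: eq_bigr => j _.
  by rewrite rmorphM /= fmorphV /= es -(psdf_herm j t H) mulrAC.
have e2 : \sum_i (x i)^* * (A i t / s) = al^* / s.
  rewrite /al rmorph_sum big_distrl /=; apply: eq_bigr => i _.
  by rewrite rmorphM /= (psdf_herm t i H) mulrA (mulrC (x i)^*).
have e3 : \sum_i (x i)^* * A i t = al^*.
  rewrite /al rmorph_sum /=; apply: eq_bigr => i _.
  by rewrite rmorphM /= (psdf_herm t i H) mulrC.
rewrite qf_sub e1 e2.
have := H (fun i => x i + (i == t)%:R * (- (al / a))).
rewrite qf_shift e3 -/al.
suff -> : qf A x + (- (al / a))^* * al + al^* * - (al / a) +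
    (- (al / a))^* * a * - (al / a) = qf A x - al^* / s * (al / s) by [].
have nza : a != 0 := nz.
rewrite rmorphN rmorphM /= fmorphV /= ea.
have e4 : al^* / s * (al / s) = al^* * al / a by rewrite -ss invfM mulrACA.
have e5 : - (al^* / a) * a * - (al / a) = al^* * al / a.
  by rewrite mulNr mulrNN divfK // mulrA.
have e6 : - (al^* / a) * al = - (al^* * al / a) by rewrite mulNr mulrAC.
have e7 : al^* * - (al / a) = - (al^* * al / a) by rewrite mulrN mulrA.
by rewrite e4 e5 e6 e7 addrNK.
Qed.


Lemma sum_ltS m (F : 'I_m -> C) t (ht : (t < m)%N) :
  \sum_(k : 'I_m | (k < t.+1)%N) F k = \sum_(k : 'I_m | (k < t)%N) F k + F (Ordinal ht).
Proof.
rewrite (bigD1 (Ordinal ht)) //= addrC; congr (_ + _).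
apply: eq_bigl => k; rewrite -(inj_eq val_inj) /= ltnS.
by rewrite andbC -ltn_neqAle.
Qed.

Lemma chol m (A : 'M[C]_m) : psdf A ->
  exists v : 'I_m -> 'I_m -> C, forall i j, A i j = \sum_k v i k * (v j k)^*.
Proof.
move=> HA.
have inv : forall t, (t <= m)%N -> exists v : 'I_m -> 'I_m -> C, exists R : 'M[C]_m,
   [/\ psdf R, (forall (i j : 'I_m), (i < t)%N -> R i j = 0) &
       forall i j, A i j = \sum_(k : 'I_m | (k < t)%N) v i k * (v j k)^* + R i j].
  elim=> [|t IH] ht.
    exists (fun _ _ => 0), A; split => // i j.
    by rewrite big1 ?add0r // => k; rewrite ltn0.
  have ht' : (t < m)%N := ht.
  have [v [R [HR R0 HAR]]] := IH (ltnW ht).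
  set tt := Ordinal ht'.
  have vS : forall (w : 'I_m -> 'I_m -> C) (i j : 'I_m),
      (forall (i k : 'I_m), (k < t)%N -> w i k = v i k) ->
      \sum_(k : 'I_m | (k < t.+1)%N) w i k * (w j k)^* =
      \sum_(k : 'I_m | (k < t)%N) v i k * (v j k)^* + w i tt * (w j tt)^*.
    move=> w i j Hw; rewrite (sum_ltS _ ht'); congr (_ + _).
    by apply: eq_bigr => k hk; rewrite !Hw.
  have ltt : forall k : 'I_m, (k < t)%N -> (k == tt) = false.
    by move=> k hk; rewrite -(inj_eq val_inj) /= ltn_eqF.
  case: (eqVneq (R tt tt) 0) => [a0 | anz].
    exists (fun i k => if k == tt then 0 else v i k), R; split => //.
      move=> i j; rewrite ltnS leq_eqVlt => /orP [/eqP it | /R0 //].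
      have -> : i = tt by apply: val_inj.
      exact: psdf_zero_row.
    move=> i j; rewrite (vS (fun i k => if k == tt then 0 else v i k)) ?eqxx ?mul0r ?addr0 ?HAR // => i' k hk.
    by rewrite ltt.
  set s := sqrtC (R tt tt).
  exists (fun i k => if k == tt then R i tt / s else v i k).
  exists (\matrix_(i, j) (R i j - R i tt / s * (R j tt / s)^*)); split.
  - exact: psdf_schur.
  - move=> i j; rewrite mxE ltnS leq_eqVlt => /orP [/eqP it | it].
      have -> : i = tt by apply: val_inj.
      have es : s^* = s by apply: conj_Creal; apply: ger0_real; rewrite sqrtC_ge0 psdf_diag_ge0.
      have ss : s * s = R tt tt by rewrite -expr2 sqrtCK.
      have nzs : s != 0 by rewrite sqrtC_eq0.
      rewrite rmorphM /= fmorphV /= es (psdf_herm tt j HR) conjCK.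
      by rewrite mulrACA -invfM ss mulrAC divff // mul1r subrr.
    by rewrite (R0 i j it) (R0 i tt it) !mul0r subrr.
  - move=> i j; rewrite (vS (fun i k => if k == tt then R i tt / s else v i k)) ?eqxx ?HAR; last by move=> i' k hk; rewrite ltt.
    by rewrite mxE -addrA; congr (_ + _); rewrite addrC subrK.
have [v [R [_ R0 HAR]]] := inv m (leqnn m).
exists v => i j; rewrite HAR R0 // addr0.
by apply: eq_bigl => k; rewrite ltn_ord.
Qed.

End Chol.

Section Idx. Variable n k : nat.
Lemma unpairK (i : 'I_n) (a : 'I_k) : unpair (pidx i a) = (i, a).
Proof. by rewrite /unpair /pidx /mxvec_index cast_ordK enum_rankK. Qed.
Lemma pidxK (p : 'I_(n * k)) : pidx (unpair p).1 (unpair p).2 = p.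
Proof. by case/mxvec_indexP: p => i a; rewrite -/(pidx i a) unpairK. Qed.
Lemma sum_pidx (R : nmodType) (F : 'I_(n * k) -> R) :
  \sum_p F p = \sum_i \sum_a F (pidx i a).
Proof.
rewrite pair_big /= (reindex (fun ia : 'I_n * 'I_k => pidx ia.1 ia.2)) //=.
exists (fun p => unpair p) => [[i a] _ | p _] /=; first by rewrite unpairK.
by rewrite pidxK.
Qed.
End Idx.

Section Kraus.
Variable C : numClosedFieldType.
Variable n : nat.

Lemma lin_facts (Phi : 'M[C]_n -> 'M[C]_n) :
  (forall (a : C) (X Y : 'M[C]_n), Phi (a *: X + Y) = a *: Phi X + Phi Y) ->
  forall X, Phi X = \sum_a \sum_b X a b *: Phi (delta_mx a b).
Proof.
move=> lin.
have P0 : Phi 0 = 0.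
  have h := lin 1 0 0; rewrite scale1r addr0 scale1r in h.
  by apply: (addrI (Phi 0)); rewrite addr0 -h.
have PD : {morph Phi : x y / x + y >-> x + y}.
  by move=> x y; have := lin 1 x y; rewrite !scale1r.
have PZ : forall a X, Phi (a *: X) = a *: Phi X.
  by move=> a X; rewrite -[a *: X]addr0 lin P0 addr0.
move=> X; rewrite {1}(matrix_sum_delta X) (big_morph Phi PD P0).
by apply: eq_bigr => a _; rewrite (big_morph Phi PD P0); apply: eq_bigr => b _; rewrite PZ.
Qed.

Definition Jin : 'M[C]_(n * n) :=
  \matrix_(p, q) (((unpair p).1 == (unpair p).2)%:R * ((unpair q).1 == (unpair q).2)%:R).

Lemma psdf_Jin : psdf Jin.
Proof.
move=> x; rewrite /qf.
set y := \sum_q ((unpair q).1 == (unpair q).2)%:R * x q.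
have -> : \sum_i \sum_j (x i)^* * Jin i j * x j = y * y^*.
  rewrite mulrC /y rmorph_sum big_distrl /=; apply: eq_bigr => i _.
  rewrite big_distrr /=; apply: eq_bigr => j _.
  by rewrite mxE rmorphM /= conjC_nat !mulrA (mulrC (x i)^*).
exact: mul_conjC_ge0.
Qed.

Lemma kraus (Phi : 'M[C]_n -> 'M[C]_n) : is_channel Phi ->
  exists K : 'I_(n * n) -> 'I_n -> 'I_n -> C,
  (forall X i j, Phi X i j = \sum_k \sum_a \sum_b K k i a * X a b * (K k j b)^*) /\
  (forall a b, \sum_k \sum_i K k i a * (K k i b)^* = (a == b)%:R).
Proof.
case=> lin cp tp.
have HJ := psd_psdf (cp n Jin (psdf_psd psdf_Jin)).
have [B HB] := chol HJ.
exists (fun k i a => B (pidx i a) k).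
have ed : forall i j a b, Phi (delta_mx a b) i j = \sum_k B (pidx i a) k * (B (pidx j b) k)^*.
  move=> i j a b; rewrite -HB /app_left mxE !unpairK /=.
  congr (Phi _ i j); apply/matrixP => i' j'; rewrite !mxE !unpairK /=.
  by rewrite -natrM mulnb.
split.
  move=> X i j; rewrite (lin_facts lin X) summxE.
  rewrite exchange_big /=; apply: eq_bigr => a _.
  rewrite summxE exchange_big /=; apply: eq_bigr => b _.
  by rewrite mxE ed big_distrr /=; apply: eq_bigr => k _; rewrite mulrCA !mulrA.
move=> a b; rewrite exchange_big /=.
have := tp (delta_mx a b); rewrite /mxtrace => e.
under eq_bigr do rewrite -ed.
rewrite e (bigD1 a) //= big1 ?addr0; first by rewrite mxE eqxx.
by move=> i /negbTE ia; rewrite mxE ia.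
Qed.

End Kraus.


Lemma g1 (V : zmodType) (a b c d : V) : b - a - d + c = -(a - b - c + d).
Proof. by rewrite !opprD !opprK (addrC b) addrAC. Qed.
Lemma g2 (V : zmodType) (a b c d : V) : c - d - a + b = -(a - b - c + d).
Proof. rewrite !opprD !opprK -addrA (addrC (-a)) addrA addrAC (addrC (c - d)) addrA.
by rewrite [LHS]addrAC [X in X - d = _]addrAC (addrC (-a) b). Qed.

Section Antisym.
Variable C : numClosedFieldType.
Variables R J : finType.

Definition sum4 (F : J -> J -> R -> R -> C) :=
  \sum_l \sum_l' \sum_r \sum_r' F l l' r r'.

Lemma sum4_swr F : sum4 F = sum4 (fun l l' r r' => F l l' r' r).
Proof.
by rewrite /sum4; apply: eq_bigr => l _; apply: eq_bigr => l' _; rewrite exchange_big.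
Qed.
Lemma sum4_swl F : sum4 F = sum4 (fun l l' r r' => F l' l r r').
Proof. by rewrite /sum4 exchange_big. Qed.
Lemma sum4D F G : sum4 (fun l l' r r' => F l l' r r' + G l l' r r') = sum4 F + sum4 G.
Proof.
rewrite /sum4 -big_split; apply: eq_bigr => l _; rewrite -big_split.
apply: eq_bigr => l' _; rewrite -big_split; apply: eq_bigr => r _; by rewrite -big_split.
Qed.
Lemma sum4N F : sum4 (fun l l' r r' => - F l l' r r') = - sum4 F.
Proof.
rewrite /sum4 -sumrN; apply: eq_bigr => l _; rewrite -sumrN.
apply: eq_bigr => l' _; rewrite -sumrN; apply: eq_bigr => r _; by rewrite -sumrN.
Qed.
Lemma sum4_ext F G : (forall l l' r r', F l l' r r' = G l l' r r') -> sum4 F = sum4 G.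
Proof.
move=> e; rewrite /sum4; apply: eq_bigr => l _; apply: eq_bigr => l' _.
by apply: eq_bigr => r _; apply: eq_bigr => r' _.
Qed.

Variable X : J -> J -> R -> R -> C.
Definition zz l l' r r' := X l l' r r' - X l l' r' r - X l' l r r' + X l' l r' r.

Lemma zz_swr l l' r r' : zz l l' r' r = - zz l l' r r'.
Proof. exact: g1. Qed.
Lemma zz_swl l l' r r' : zz l' l r r' = - zz l l' r r'.
Proof. exact: g2. Qed.

Lemma antisym :
  sum4 (fun l l' r r' => zz l l' r r' * (zz l l' r r')^*) =
  4%:R * sum4 (fun l l' r r' => zz l l' r r' * (X l l' r r')^*).
Proof.
set T := sum4 (fun l l' r r' => zz l l' r r' * (X l l' r r')^*).
have Es : sum4 (fun l l' r r' => zz l l' r r' * (X l l' r' r)^*) = - T.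
  rewrite sum4_swr -sum4N; apply: sum4_ext => l l' r r'; by rewrite zz_swr mulNr.
have Eu : sum4 (fun l l' r r' => zz l l' r r' * (X l' l r r')^*) = - T.
  rewrite sum4_swl -sum4N; apply: sum4_ext => l l' r r'; by rewrite zz_swl mulNr.
have Esu : sum4 (fun l l' r r' => zz l l' r r' * (X l' l r' r)^*) = T.
  rewrite sum4_swl sum4_swr; apply: sum4_ext => l l' r r'; by rewrite zz_swr zz_swl opprK.
have -> : sum4 (fun l l' r r' => zz l l' r r' * (zz l l' r r')^*) =
   sum4 (fun l l' r r' => zz l l' r r' * (X l l' r r')^*
        + - (zz l l' r r' * (X l l' r' r)^*)
        + - (zz l l' r r' * (X l' l r r')^*)
        + zz l l' r r' * (X l' l r' r)^*).
  apply: sum4_ext => l l' r r'.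
  by rewrite {2}/zz !rmorphD !rmorphN /= !mulrDr !mulrN.
rewrite !sum4D !sum4N Es Eu Esu !opprK.
by rewrite -/T (mulr_natl T 4) !mulrS mulr0n addr0 !addrA.
Qed.

End Antisym.

Section KeyW.
Variable C : numClosedFieldType.
Variables I J R : finType.
Variable w : I -> J -> R -> C.

Definition ip k l k' l' := \sum_r w k l r * (w k' l' r)^*.
Definition SS := \sum_k \sum_l ip k l k l.
Definition Vs := \sum_k \sum_l \sum_k' \sum_l' ip k l k' l' * ip k' l' k l.
Definition Vu := \sum_l \sum_l' (\sum_k ip k l' k l) * (\sum_k ip k l k l').
Definition Vsu := \sum_k \sum_k' (\sum_l ip k' l k l) * (\sum_l ip k l k' l).

Lemma sum4_prod (F : J -> J -> R -> R -> C) G :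
  (forall l l', \sum_r \sum_r' F l l' r r' = G l l') -> sum4 F = \sum_l \sum_l' G l l'.
Proof. by move=> e; rewrite /sum4; apply: eq_bigr => l _; apply: eq_bigr => l' _. Qed.

Lemma prod_inner (a b : R -> C) :
  \sum_r \sum_r' (a r * b r') = (\sum_r a r) * (\sum_r' b r').
Proof. by rewrite big_distrlr. Qed.

Lemma sum_swap_mid (F : I -> I -> J -> J -> C) :
  \sum_k \sum_k' \sum_l \sum_l' F k k' l l' = \sum_k \sum_l \sum_k' \sum_l' F k k' l l'.
Proof. by apply: eq_bigr => k _; rewrite exchange_big. Qed.

Lemma keyW : 0 <= SS * SS - Vs - Vu + Vsu.
Proof.
pose X k k' := fun l l' r r' => w k l r * w k' l' r'.
have pos : 0 <= \sum_k \sum_k' sum4 (fun l l' r r' =>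
    zz (X k k') l l' r r' * (zz (X k k') l l' r r')^*).
  apply: sumr_ge0 => k _; apply: sumr_ge0 => k' _.
  apply: sumr_ge0 => l _; apply: sumr_ge0 => l' _.
  apply: sumr_ge0 => r _; apply: sumr_ge0 => r' _; exact: mul_conjC_ge0.
have E : forall k k', sum4 (fun l l' r r' => zz (X k k') l l' r r' * (X k k' l l' r r')^*) =
   \sum_l \sum_l' ip k l k l * ip k' l' k' l'
   - \sum_l \sum_l' ip k' l' k l * ip k l k' l'
   - \sum_l \sum_l' ip k l' k l * ip k' l k' l'
   + \sum_l \sum_l' ip k' l k l * ip k l' k' l'.
  move=> k k'.
  rewrite (@sum4_ext _ _ _ _ (fun l l' r r' => X k k' l l' r r' * (X k k' l l' r r')^*
       + - (X k k' l l' r' r * (X k k' l l' r r')^*)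
       + - (X k k' l' l r r' * (X k k' l l' r r')^*)
       + X k k' l' l r' r * (X k k' l l' r r')^*)); last first.
    by move=> l l' r r'; rewrite /zz !mulrDl !mulNr.
  rewrite !sum4D !sum4N.
  congr (_ - _ - _ + _); apply: sum4_prod => l l'; rewrite /ip -prod_inner;
    apply: eq_bigr => r _; apply: eq_bigr => r' _; rewrite /X rmorphM /=.
  - by rewrite mulrACA.
  - by rewrite (mulrC (w k l r')) mulrACA.
  - by rewrite mulrACA.
  - by rewrite (mulrC (w k l' r')) mulrACA.
have swap4 : forall F : I -> I -> J -> J -> C,
    \sum_k \sum_k' \sum_l \sum_l' F k k' l l' = \sum_l \sum_l' \sum_k \sum_k' F k k' l l'.
  move=> F; rewrite sum_swap_mid exchange_big; apply: eq_bigr => l _.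
  rewrite (eq_bigr (fun k => \sum_l' \sum_k' F k k' l l')); last first.
    by move=> k _; rewrite exchange_big.
  by rewrite exchange_big.
have lin : forall A B D G : I -> I -> C,
    \sum_k \sum_k' (A k k' - B k k' - D k k' + G k k') =
    \sum_k \sum_k' A k k' - \sum_k \sum_k' B k k' - \sum_k \sum_k' D k k'
      + \sum_k \sum_k' G k k'.
  move=> A B D G; rewrite -!sumrB -big_split /=; apply: eq_bigr => k _.
  by rewrite -!sumrB -big_split.
have H4 : \sum_k \sum_k' sum4 (fun l l' r r' =>
    zz (X k k') l l' r r' * (zz (X k k') l l' r r')^*) =
    4%:R * (SS * SS - Vs - Vu + Vsu).
  under eq_bigr do under eq_bigr do rewrite antisym E.
  under eq_bigr do rewrite -big_distrr /=.
  rewrite -big_distrr /=; congr (_ * _).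
  rewrite lin; congr (_ - _ - _ + _).
  - rewrite /SS big_distrlr /=; apply: eq_bigr => k _; apply: eq_bigr => k' _.
    by rewrite big_distrlr.
  - by rewrite /Vs sum_swap_mid; do 4 (apply: eq_bigr => ? _); rewrite mulrC.
  - rewrite /Vu swap4; apply: eq_bigr => l _; apply: eq_bigr => l' _.
    by rewrite big_distrlr.
  - by rewrite /Vsu; apply: eq_bigr => k _; apply: eq_bigr => k' _; rewrite big_distrlr.
by move: pos; rewrite H4 pmulr_rge0 // ltr0n.
Qed.

End KeyW.

Section Swap.
Variable C : numClosedFieldType.
Variables I J R : finType.
Variable w : I -> J -> R -> C.
Definition swapw : J -> I -> R -> C := fun l k r => w k l r.

Lemma SS_swap : SS swapw = SS w.
Proof. by rewrite /SS exchange_big. Qed.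
Lemma Vs_swap : Vs swapw = Vs w.
Proof.
rewrite /Vs exchange_big; apply: eq_bigr => k _; apply: eq_bigr => l _.
by rewrite exchange_big.
Qed.
Lemma Vu_swap : Vu swapw = Vsu w.
Proof. by []. Qed.
Lemma Vsu_swap : Vsu swapw = Vu w.
Proof. by []. Qed.

Lemma ip_conj k l k' l' : ip w k' l' k l = (ip w k l k' l')^*.
Proof. by rewrite /ip rmorph_sum; apply: eq_bigr => r _; rewrite rmorphM /= conjCK mulrC. Qed.

Lemma Vs_pos : SS w != 0 -> 0 < Vs w.
Proof.
move=> nz.
have ge : forall k l k' l', 0 <= ip w k l k' l' * ip w k' l' k l.
  by move=> k l k' l'; rewrite (ip_conj k l k' l') mul_conjC_ge0.
have V0 : 0 <= Vs w.
  by apply: sumr_ge0 => k _; apply: sumr_ge0 => l _; apply: sumr_ge0 => k' _;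
     apply: sumr_ge0 => l' _.
rewrite lt_def V0 andbT; apply: contra nz => /eqP V.
have H1 : forall k, \sum_l \sum_k' \sum_l' ip w k l k' l' * ip w k' l' k l = 0.
  move=> k; apply: (psumr_eq0P _ V) => // k0 _.
  by apply: sumr_ge0 => l _; apply: sumr_ge0 => k' _; apply: sumr_ge0 => l' _.
apply/eqP; rewrite /SS big1 // => k _; rewrite big1 // => l _.
have H2 : \sum_k' \sum_l' ip w k l k' l' * ip w k' l' k l = 0.
  apply: (psumr_eq0P _ (H1 k)) => // l0 _.
  by apply: sumr_ge0 => k' _; apply: sumr_ge0 => l' _.
have H3 : \sum_l' ip w k l k l' * ip w k l' k l = 0.
  apply: (psumr_eq0P _ H2) => // k0 _.
  by apply: sumr_ge0 => l' _.
have H4 : ip w k l k l * ip w k l k l = 0.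
  by apply: (psumr_eq0P _ H3) => // l0 _.
by move/eqP: H4; rewrite mulf_eq0 orbb => /eqP.
Qed.
End Swap.


Lemma rearr6 (C : comRingType) (x1 x2 x3 y1 y2 y3 : C) :
  x1 * (x2 * (x3 * y3) * y2) * y1 = (x1 * x2 * x3) * (y1 * y2 * y3).
Proof.
rewrite !mulrA.
by rewrite (mulrAC (x1 * x2 * x3 * y3) y2 y1) (mulrAC (x1 * x2 * x3) y3 y1)
  (mulrAC (x1 * x2 * x3 * y1) y3 y2).
Qed.

Section Sums.
Variable C : comRingType.
Lemma mul_sum2 (A B D E : finType) (f : A -> B -> C) (g : D -> E -> C) :
  (\sum_a \sum_b f a b) * (\sum_d \sum_e g d e) = \sum_a \sum_b \sum_d \sum_e f a b * g d e.
Proof.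
rewrite big_distrl /=; apply: eq_bigr => a _; rewrite big_distrl /=; apply: eq_bigr => b _.
rewrite big_distrr /=; apply: eq_bigr => d _; by rewrite big_distrr.
Qed.
Lemma sum3_mid (A B D : finType) (x y : C) (G : A -> B -> D -> C) :
  x * (\sum_a \sum_b \sum_d G a b d) * y = \sum_a \sum_b \sum_d x * G a b d * y.
Proof.
rewrite big_distrr big_distrl /=; apply: eq_bigr => a _.
rewrite big_distrr big_distrl /=; apply: eq_bigr => b _.
by rewrite big_distrr big_distrl /=; apply: eq_bigr => d _.
Qed.
Lemma swap22 (A B D E : finType) (F : A -> B -> D -> E -> C) :
  \sum_a \sum_b \sum_d \sum_e F a b d e = \sum_d \sum_e \sum_a \sum_b F a b d e.
Proof.
transitivity (\sum_a \sum_d \sum_b \sum_e F a b d e).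
  by apply: eq_bigr => a _; rewrite exchange_big.
rewrite exchange_big; apply: eq_bigr => d _.
transitivity (\sum_a \sum_e \sum_b F a b d e).
  by apply: eq_bigr => a _; rewrite exchange_big.
by rewrite exchange_big.
Qed.
End Sums.

Section Gram.
Variable C : numClosedFieldType.
Lemma purity_gram (X : finType) m (f : X -> 'I_m -> C) (c : C) (M : 'M[C]_m) :
  (forall p q, M p q = c * \sum_x f x p * (f x q)^*) ->
  purity M = \sum_x \sum_y (c * \sum_p f x p * (f y p)^*) * (c * \sum_p f y p * (f x p)^*).
Proof.
move=> HM; rewrite /purity /mxtrace.
under eq_bigr do rewrite mxE.
under eq_bigr do under eq_bigr do rewrite !HM mulrACA big_distrlr big_distrr /=.
under [RHS]eq_bigr do under eq_bigr do rewrite mulrACA big_distrlr big_distrr /=.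
under eq_bigr do under eq_bigr do under eq_bigr do rewrite big_distrr /=.
under [RHS]eq_bigr do under eq_bigr do under eq_bigr do rewrite big_distrr /=.
rewrite swap22; do 4 (apply: eq_bigr => ? _).
congr (_ * _); rewrite mulrACA [RHS]mulrACA; congr (_ * _); exact: mulrC.
Qed.

Variable n : nat.
Lemma jam_entry (Phi : 'M[C]_n -> 'M[C]_n) (K : 'I_(n * n) -> 'I_n -> 'I_n -> C) :
  (forall X i j, Phi X i j = \sum_k \sum_a \sum_b K k i a * X a b * (K k j b)^*) ->
  forall p q, jam Phi p q =
    (n%:R)^-1 * \sum_k K k (unpair p).1 (unpair p).2 * (K k (unpair q).1 (unpair q).2)^*.
Proof.
move=> HK p q.
rewrite /jam /app_left mxE HK big_distrr /=; apply: eq_bigr => k _.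
rewrite (bigD1 (unpair p).2) //= [X in _ + X]big1 ?addr0; last first.
  move=> a /negbTE na; apply: big1 => b _; by rewrite !mxE !unpairK /= na /= mulr0 mul0r.
rewrite (bigD1 (unpair q).2) //= [X in _ + X]big1 ?addr0; last first.
  move=> b /negbTE nb; by rewrite !mxE !unpairK /= eqxx nb /= mulr0 mul0r.
by rewrite !mxE !unpairK /= !eqxx /= mulrAC mulrC.
Qed.
End Gram.

Section Main.
Variable C : numClosedFieldType.
Variable n : nat.
Variables K L : 'I_(n * n) -> 'I_n -> 'I_n -> C.
Variables Phi1 Phi2 : 'M[C]_n -> 'M[C]_n.
Hypothesis HK : forall X i j, Phi1 X i j = \sum_k \sum_a \sum_b K k i a * X a b * (K k j b)^*.
Hypothesis HL : forall X i j, Phi2 X i j = \sum_k \sum_a \sum_b L k i a * X a b * (L k j b)^*.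
Variable psi : 'cV[C]_(n * n).

Definition w k l (p : 'I_(n * n)) :=
  \sum_i \sum_a K k (unpair p).1 i * L l (unpair p).2 a * psi (pidx i a) 0.

Lemma rho_form p q : tensor_map Phi1 Phi2 (psi *m adj psi) p q =
  \sum_k \sum_l w k l p * (w k l q)^*.
Proof.
rewrite /tensor_map /app_left mxE HK; apply: eq_bigr => k _.
have Xe : forall x y, (psi *m adj psi) x y = psi x 0 * (psi y 0)^*.
  by move=> x y; rewrite mxE big_ord1 /adj !mxE.
under eq_bigr do under eq_bigr do rewrite !mxE !unpairK /= HL sum3_mid.
under eq_bigr do rewrite exchange_big /=.
rewrite exchange_big /=; apply: eq_bigr => l _.
rewrite /w rmorph_sum /=; under [X in _ = _ * X]eq_bigr do rewrite rmorph_sum /=.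
rewrite mul_sum2; apply: eq_bigr => a _; rewrite exchange_big /=.
apply: eq_bigr => c _; apply: eq_bigr => b _; apply: eq_bigr => d _.
by rewrite !mxE big_ord1 /adj !mxE !rmorphM /= rearr6.
Qed.

Hypothesis TK : forall a b, \sum_k \sum_i K k i a * (K k i b)^* = (a == b)%:R.
Hypothesis TL : forall a b, \sum_k \sum_i L k i a * (L k i b)^* = (a == b)%:R.
Hypothesis Red1 : red1 psi = (n%:R)^-1%:M.
Hypothesis Red2 : red2 psi = (n%:R)^-1%:M.

Definition Km k : 'M[C]_n := \matrix_(i, j) K k i j.
Definition Lm k : 'M[C]_n := \matrix_(i, j) L k i j.
Definition Psi : 'M[C]_n := \matrix_(i, a) psi (pidx i a) 0.
Definition W k l := Km k *m Psi *m (Lm l)^T.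

Lemma adjM m1 m2 m3 (A : 'M[C]_(m1, m2)) (B : 'M[C]_(m2, m3)) :
  adj (A *m B) = adj B *m adj A.
Proof. by rewrite /adj map_mxM trmx_mul. Qed.

Lemma w_mx k l p : w k l p = W k l (unpair p).1 (unpair p).2.
Proof.
rewrite /w /W mxE exchange_big /=; apply: eq_bigr => a _.
rewrite !mxE big_distrl /=; apply: eq_bigr => i _.
by rewrite !mxE mulrAC.
Qed.

Lemma ip_tr k l k' l' : ip w k l k' l' = \tr (W k l *m adj (W k' l')).
Proof.
rewrite /ip sum_pidx /mxtrace; apply: eq_bigr => i _.
rewrite mxE; apply: eq_bigr => a _.
by rewrite !w_mx !unpairK /adj !mxE.
Qed.

Lemma PsiPsi : Psi *m adj Psi = (n%:R)^-1%:M.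
Proof. by rewrite -Red1; apply/matrixP => i j; rewrite !mxE; apply: eq_bigr => a _; rewrite !mxE. Qed.

Lemma adjPsiPsi : adj Psi *m Psi = (n%:R)^-1%:M.
Proof.
apply/matrixP => a b.
have -> : (adj Psi *m Psi) a b = red2 psi b a.
  by rewrite !mxE; apply: eq_bigr => i _; rewrite !mxE mulrC.
by rewrite Red2 !mxE eq_sym.
Qed.

Lemma TLm : \sum_l (Lm l)^T *m adj ((Lm l)^T) = 1%:M.
Proof.
apply/matrixP => a b; rewrite summxE mxE -TL; apply: eq_bigr => l _.
by rewrite mxE; apply: eq_bigr => x _; rewrite !mxE.
Qed.

Lemma TKm : \sum_k adj (Km k) *m Km k = 1%:M.
Proof.
apply/matrixP => a b; rewrite summxE mxE eq_sym -TK; apply: eq_bigr => k _.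
by rewrite mxE; apply: eq_bigr => x _; rewrite !mxE mulrC.
Qed.


Lemma g1_eq k k' : \sum_l ip w k l k' l = (n%:R)^-1 * \tr (Km k *m adj (Km k')).
Proof.
have e : forall l, ip w k l k' l = \tr (Km k *m Psi *m ((Lm l)^T *m adj (Lm l)^T)
    *m (adj Psi *m adj (Km k'))).
  by move=> l; rewrite ip_tr /W !adjM !mulmxA.
under eq_bigr do rewrite e.
rewrite -raddf_sum /= -mulmx_suml -mulmx_sumr TLm mulmx1 mulmxA -(mulmxA (Km k)) PsiPsi.
by rewrite mul_mx_scalar -scalemxAl mxtraceZ.
Qed.

Lemma g2_eq l l' : \sum_k ip w k l k l' = (n%:R)^-1 * \tr ((Lm l)^T *m adj ((Lm l')^T)).
Proof.
have e : forall k, ip w k l k l' = \tr ((adj (Km k) *m Km k) *m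
    (Psi *m ((Lm l)^T *m adj (Lm l')^T) *m adj Psi)).
  move=> k; rewrite ip_tr /W !adjM -!mulmxA [LHS]mxtrace_mulC !mulmxA.
  by rewrite -(mulmxA _ (adj (Km k)) (Km k)) [LHS]mxtrace_mulC !mulmxA.
under eq_bigr do rewrite e.
rewrite -raddf_sum /= -mulmx_suml TKm mul1mx mxtrace_mulC (mulmxA (adj Psi)) adjPsiPsi.
by rewrite mul_scalar_mx mxtraceZ.
Qed.


Lemma S_eq : (0 < n)%N -> SS w = 1.
Proof.
move=> n0; rewrite /SS; under eq_bigr do rewrite g1_eq mxtrace_mulC.
rewrite -big_distrr /= -raddf_sum /= TKm mxtrace1 mulVf //.
by rewrite pnatr_eq0 -lt0n.
Qed.

Lemma trK (A B : 'M[C]_n) :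
  \tr (A *m adj B) = \sum_(p : 'I_(n * n)) A (unpair p).1 (unpair p).2 * (B (unpair p).1 (unpair p).2)^*.
Proof.
rewrite sum_pidx /mxtrace; apply: eq_bigr => i _; rewrite mxE; apply: eq_bigr => a _.
by rewrite !unpairK /adj !mxE.
Qed.

Lemma trT (A B : 'M[C]_n) : \tr (A^T *m adj (B^T)) = \tr (A *m adj B).
Proof. by rewrite -mxtrace_tr trmx_mul /adj trmxK map_trmx trmxK mxtrace_mulC. Qed.

Definition h1 k k' := (n%:R)^-1 * \tr (Km k *m adj (Km k')).
Definition h2 l l' := (n%:R)^-1 * \tr ((Lm l)^T *m adj ((Lm l')^T)).

Lemma P1_eq : purity (jam Phi1) = \sum_k \sum_k' h1 k k' * h1 k' k.
Proof.
rewrite (purity_gram (f := fun k (p : 'I_(n * n)) => K k (unpair p).1 (unpair p).2)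
   (c := (n%:R)^-1)); last exact: jam_entry HK.
apply: eq_bigr => k _; apply: eq_bigr => k' _.
by rewrite /h1 !trK; congr (_ * _ * (_ * _)); apply: eq_bigr => p _; rewrite !mxE.
Qed.

Lemma P2_eq : purity (jam Phi2) = \sum_l \sum_l' h2 l l' * h2 l' l.
Proof.
rewrite (purity_gram (f := fun k (p : 'I_(n * n)) => L k (unpair p).1 (unpair p).2)
   (c := (n%:R)^-1)); last exact: jam_entry HL.
apply: eq_bigr => k _; apply: eq_bigr => k' _.
by rewrite /h2 !trT !trK; congr (_ * _ * (_ * _)); apply: eq_bigr => p _; rewrite !mxE.
Qed.

Lemma pr_eq : purity (tensor_map Phi1 Phi2 (psi *m adj psi)) = Vs w.
Proof.
rewrite (purity_gram (f := fun (t : 'I_(n * n) * 'I_(n * n)) p => w t.1 t.2 p) (c := 1)); last first.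
  by move=> p q; rewrite rho_form mul1r pair_big.
rewrite /Vs [RHS]pair_big; apply: eq_bigr => [[k l]] _; rewrite [RHS]pair_big.
by apply: eq_bigr => [[k' l']] _; rewrite !mul1r.
Qed.

Lemma Vsu_eq : Vsu w = purity (jam Phi1).
Proof.
rewrite P1_eq /Vsu; apply: eq_bigr => k _; apply: eq_bigr => k' _.
by rewrite !g1_eq mulrC.
Qed.

Lemma Vu_eq : Vu w = purity (jam Phi2).
Proof.
rewrite P2_eq /Vu; apply: eq_bigr => l _; apply: eq_bigr => l' _.
by rewrite !g2_eq mulrC.
Qed.

End Main.

Unset Implicit Arguments.

Theorem mainTheorem3 (C : numClosedFieldType) (log : C -> C)
  (log_mono : {in Num.pos &, {homo log : x y / x <= y}})
  (n : nat) (Phi1 Phi2 : 'M[C]_n -> 'M[C]_n) (psi : 'cV[C]_(n * n)) :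
  is_channel Phi1 -> is_channel Phi2 -> max_entangled psi ->
  - log (1 - `|purity (jam Phi1) - purity (jam Phi2)|)
    <= S2 log (tensor_map Phi1 Phi2 (psi *m adj psi)).
Proof.
move=> ch1 ch2 [nrm Red1 Red2].
have n0 : (0 < n)%N.
  rewrite lt0n; apply/negP => /eqP n0; move: nrm; rewrite mxE big1.
    by move/eqP; rewrite eq_sym oner_eq0.
  move=> j _; exfalso; move: (ltn_ord j); move: (nat_of_ord j) => m.
  by rewrite n0.
have [K [HK TK]] := kraus ch1.
have [L [HL TL]] := kraus ch2.
set w0 := w K L psi.
have S1 : SS w0 = 1 := S_eq TK TL Red1 n0.
have D1 := keyW w0.
have D2 := keyW (swapw w0).
rewrite SS_swap Vs_swap Vu_swap Vsu_swap in D2.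
rewrite S1 mulr1 (Vsu_eq HK TL Red1) (Vu_eq HL TK Red2) in D1 D2.
rewrite -(pr_eq HK HL) in D1 D2.
rewrite /S2.
set pr := purity _ in D1 D2 *.
set P1 := purity (jam Phi1) in D1 D2 *.
set P2 := purity (jam Phi2) in D1 D2 *.
have prpos : 0 < pr by rewrite /pr (pr_eq HK HL) Vs_pos // S1 oner_eq0.
have E1 : 1 - pr - P2 + P1 = (1 - pr) + (P1 - P2) by rewrite addrAC -addrA.
have E2 : 1 - pr - P1 + P2 = (1 - pr) - (P1 - P2) by rewrite addrAC -addrA opprB.
rewrite E1 in D1; rewrite E2 in D2.
set y := 1 - pr in D1 D2 *; set d := P1 - P2 in D1 D2 *.
have yr : y \is Num.real := rpredB (rpred1 _) (ger0_real (ltW prpos)).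
have dr : d \is Num.real.
  have -> : d = (y + d) - y by rewrite addrC addKr.
  exact: rpredB (ger0_real D1) yr.
have hN : `|d| <= y.
  rewrite real_ler_norml //; apply/andP; split.
    by rewrite -subr_ge0 opprK addrC.
  by rewrite -subr_ge0.
have hle : pr <= 1 - `|d|.
  by rewrite -subr_ge0 addrAC -/y subr_ge0.
have posR : 0 < 1 - `|d| := lt_le_trans prpos hle.
rewrite lerN2; apply: log_mono => //; by rewrite posrE.
Qed.
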